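(* Consider a region discretized by the FDTD-Q scheme described in the context, with $0<\Delta t<\Delta t_{\mathrm{CFL,gen}}=2/\rho\!\left(\frac{1}{\hbar}(D_V'')^{-1/2}H(D_V'')^{-1/2}\right)$ ($\rho$ the spectral radius), and assume $\mathcal{I}_P^{n+\frac12}=0$ for all $n=0,1,\dots,n_t-1$. Then $$\|\psi^n\|_2\le\sqrt{\kappa(\mathbf{P})}\,\|\psi^0\|_2,\qquad n=0,1,\dots,n_t,$$ where $\kappa(\mathbf{P})$ is the (2-norm) condition number of $\mathbf{P}$.
   Context: Fix constants $\hbar>0$, $m>0$, cell sizes $\Delta x,\Delta y,\Delta z>0$, positive integers $n_x,n_y,n_z,n_t$ and a time step $\Delta t>0$. The region is a box made of $n_x\times n_y\times n_z$ primary cells of size $\Delta x\times\Delta y\times\Delta z$, with primary nodes $(i,j,k)$, $1\le i\le n_x+1$, $1\le j\le n_y+1$, $1\le k\le n_z+1$. Let $N=(n_x+1)(n_y+1)(n_z+1)$; vectors indexed by nodes use the ordering $i+(j-1)(n_x+1)+(k-1)(n_x+1)(n_y+1)$. Real potential values $U_{i,j,k}$ are given at the nodes; $D_U$ is the $N\times N$ diagonal matrix containing them. Let $I_p$ be the $p\times p$ identity, $\tilde I_p=\mathrm{diag}(\tfrac12,1,\dots,1,\tfrac12)$ ($p\times p$), $W_p=[0_{p\times1}\ I_p]-[I_p\ 0_{p\times 1}]$ ($p\times(p+1)$), $\otimes$ the Kronecker product, and $e\{p,q\}$ the $q\times 1$ vector with $1$ in position $p$ and zeros elsewhere. Define $D_V''=\Delta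 x\Delta y\Delta z\,\tilde I_{n_z+1}\otimes\tilde I_{n_y+1}\otimes\tilde I_{n_x+1}$; $D=[D_x\ D_y\ D_z]$ with $D_x=-I_{n_z+1}\otimes I_{n_y+1}\otimes W_{n_x}^T$, $D_y=-I_{n_z+1}\otimes W_{n_y}^T\otimes I_{n_x+1}$, $D_z=-W_{n_z}^T\otimes I_{n_y+1}\otimes I_{n_x+1}$; $D_S''=\mathrm{diag}(\Delta y\Delta z\,\tilde I_{n_z+1}\otimes\tilde I_{n_y+1}\otimes I_{n_x},\ \Delta x\Delta z\,\tilde I_{n_z+1}\otimes I_{n_y}\otimes\tilde I_{n_x+1},\ \Delta x\Delta y\,I_{n_z}\otimes\tilde I_{n_y+1}\otimes\tilde I_{n_x+1})$; $D_l'=\mathrm{diag}(\Delta x\, I_{n_x(n_y+1)(n_z+1)},\ \Delta y\, I_{(n_x+1)n_y(n_z+1)},\ \Delta z\, I_{(n_x+1)(n_y+1)n_z})$; $H=\frac{\hbar^2}{2m}D D_S''(D_l')^{-1}D^T+D_V''D_U$; $\mathbf{P}=\begin{bmatrix}D_V''&-\frac{\Delta t}{2\hbar}H\\-\frac{\Delta t}{2\hbar}H&D_V''\end{bmatrix}$. Boundary (''hanging'') variables: $L=[L_W\ L_E\ L_S\ L_N\ L_B\ L_T]$ with $L_W=I_{n_z+1}\otimes I_{n_y+1}\otimes e\{1,n_x+1\}$, $L_E=I_{n_z+1}\otimes I_{n_y+1}\otimes e\{n_x+1,n_x+1\}$, $L_S=I_{n_z+1}\otimes e\{1,n_y+1\}\otimes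 I_{n_x+1}$, $L_N=I_{n_z+1}\otimes e\{n_y+1,n_y+1\}\otimes I_{n_x+1}$, $L_B=e\{1,n_z+1\}\otimes I_{n_y+1}\otimes I_{n_x+1}$, $L_T=e\{n_z+1,n_z+1\}\otimes I_{n_y+1}\otimes I_{n_x+1}$; let $M$ be the number of columns of $L$. $D_{\hat n}=\mathrm{diag}(-I_{(n_y+1)(n_z+1)},I_{(n_y+1)(n_z+1)},-I_{(n_x+1)(n_z+1)},I_{(n_x+1)(n_z+1)},-I_{(n_x+1)(n_y+1)},I_{(n_x+1)(n_y+1)})$; $D_{S,b}''=\mathrm{diag}(\Delta y\Delta z\,\tilde I_{n_z+1}\otimes\tilde I_{n_y+1},\ \Delta y\Delta z\,\tilde I_{n_z+1}\otimes\tilde I_{n_y+1},\ \Delta x\Delta z\,\tilde I_{n_z+1}\otimes\tilde I_{n_x+1},\ \Delta x\Delta z\,\tilde I_{n_z+1}\otimes\tilde I_{n_x+1},\ \Delta x\Delta y\,\tilde I_{n_y+1}\otimes\tilde I_{n_x+1},\ \Delta x\Delta y\,\tilde I_{n_y+1}\otimes\tilde I_{n_x+1})$; $H_\perp=\frac{\hbar^2}{2m}L D_{\hat n}D_{S,b}''$. FDTD-Q scheme: real vectors $\psi_R^n\in\mathbb{R}^N$ and $\psi_I^{n-\frac12}\in\mathbb{R}^N$ ($n=0,\dots,n_t$), and arbitrary boundary vectors $g_R^n\in\mathbb{R}^M$, $g_I^{n+\frac12}\in\mathbb{R}^M$ ($n=0,\dots,n_t-1$), satisfying for $n=0,\dots,n_t-1$: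 $\hbar D_V''\frac{\psi_R^{n+1}-\psi_R^n}{\Delta t}=H\psi_I^{n+\frac12}-H_\perp g_I^{n+\frac12}$ and $\hbar D_V''\frac{\psi_I^{n+\frac12}-\psi_I^{n-\frac12}}{\Delta t}=-H\psi_R^n+H_\perp g_R^n$. Let $\psi^n=\begin{bmatrix}\psi_R^n\\ \psi_I^{n-\frac12}\end{bmatrix}$, $g^{n+\frac12}=\begin{bmatrix}g_R^n\\ g_I^{n+\frac12}\end{bmatrix}$, $J_1=\begin{bmatrix}0&1\\-1&0\end{bmatrix}$. Probability current: $\mathcal{I}_P^{n+\frac12}=\frac{2}{\hbar}\left(\frac{\psi^{n+1}+\psi^n}{2}\right)^T(J_1\otimes H_\perp)g^{n+\frac12}$, $n=0,\dots,n_t-1$. *)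

(* Defs.v *)
From HB Require Import structures.
From mathcomp Require Import all_boot all_order all_algebra.
From mathcomp Require Import classical_sets reals.
From mathcomp Require Import complex mxtens.
Set Implicit Arguments. Unset Strict Implicit. Unset Printing Implicit Defensive.
Import Order.TTheory GRing.Theory Num.Theory.
Local Open Scope ring_scope.
Local Open Scope classical_set_scope.

Section Generic.
Variable R : realType.

Definition norm2 {n} (v : 'cV[R]_n) : R := Num.sqrt (\sum_i v i 0 ^+ 2).

Definition opnorm2 {p q} (A : 'M[R]_(p, q)) : R :=
  sup [set norm2 (A *m x) | x in [set x : 'cV[R]_q | norm2 x = 1]].

Definition cond2 {p} (A : 'M[R]_p) : R := opnorm2 A * opnorm2 (invmx A).

Definition specrad {p} (A : 'M[R]_p) : R :=
  sup [set ComplexField.Normc.normc l |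
        l in [set l : R[i] | eigenvalue (map_mx (fun x : R => x%:C%C) A) l]].

Definition diag_invsqrt {p} (D : 'M[R]_p) : 'M[R]_p :=
  \matrix_(i, j) (if i == j then (Num.sqrt (D i i))^-1 else 0).

Definition tI p : 'M[R]_p :=
  \matrix_(i, j) (if i == j then
                    (if (i == 0 :> nat) || (i == p.-1 :> nat) then 2^-1 else 1)
                  else 0).

(* W_p = [0_{p x 1} I_p] - [I_p 0_{p x 1}]  (p x (p+1)) *)
Definition Wm p : 'M[R]_(p, p.+1) :=
  \matrix_(i, j) ((j == i.+1 :> nat)%:R - (j == i :> nat)%:R).

(* e{k,q}: q x 1 vector with 1 in (1-based) position k *)
Definition ev k q : 'cV[R]_q := \col_(i < q) ((i.+1 == k)%N)%:R.

Definition bdiag {m1 n1 m2 n2} (A : 'M[R]_(m1, n1)) (B : 'M[R]_(m2, n2)) :=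
  block_mx A 0 0 B.

End Generic.

Section FDTDQ.
Variables (R : realType) (hbar mass dx dy dz : R) (nx ny nz : nat).
Variable dt : R.

Local Notation I p := (1%:M : 'M[R]_p).
Local Notation "A *t B" := (tensmx A B) (at level 40, left associativity).

(* N = (n_x+1)(n_y+1)(n_z+1), node ordering i + (j-1)(n_x+1) + (k-1)(n_x+1)(n_y+1) *)
Definition Nn := (nz.+1 * ny.+1 * nx.+1)%N.

Definition DVpp : 'M[R]_Nn := (dx * dy * dz) *: (tI R nz.+1 *t tI R ny.+1 *t tI R nx.+1).

Definition DU (U : 'cV[R]_Nn) : 'M[R]_Nn := diag_mx U^T.

Definition Dx := - (I nz.+1 *t I ny.+1 *t (Wm R nx)^T).
Definition Dy := - (I nz.+1 *t (Wm R ny)^T *t I nx.+1).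
Definition Dz := - ((Wm R nz)^T *t I ny.+1 *t I nx.+1).
Definition Dmat := row_mx Dx (row_mx Dy Dz).

Definition DSpp :=
  bdiag ((dy * dz) *: (tI R nz.+1 *t tI R ny.+1 *t I nx))
    (bdiag ((dx * dz) *: (tI R nz.+1 *t I ny *t tI R nx.+1))
           ((dx * dy) *: (I nz *t tI R ny.+1 *t tI R nx.+1))).

Definition Dlp :=
  bdiag (dx%:M : 'M[R]_(nz.+1 * ny.+1 * nx))
    (bdiag (dy%:M : 'M[R]_(nz.+1 * ny * nx.+1))
           (dz%:M : 'M[R]_(nz * ny.+1 * nx.+1))).

Definition Hmat (U : 'cV[R]_Nn) : 'M[R]_Nn :=
  (hbar ^+ 2 / (2 * mass)) *: (Dmat *m DSpp *m invmx Dlp *m Dmat^T) + DVpp *m DU U.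

Definition Pmat (U : 'cV[R]_Nn) : 'M[R]_(Nn + Nn) :=
  block_mx DVpp (- (dt / (2 * hbar)) *: Hmat U) (- (dt / (2 * hbar)) *: Hmat U) DVpp.

Definition LW := I nz.+1 *t I ny.+1 *t ev R 1 nx.+1.
Definition LE := I nz.+1 *t I ny.+1 *t ev R nx.+1 nx.+1.
Definition LS := I nz.+1 *t ev R 1 ny.+1 *t I nx.+1.
Definition LN := I nz.+1 *t ev R ny.+1 ny.+1 *t I nx.+1.
Definition LB := ev R 1 nz.+1 *t I ny.+1 *t I nx.+1.
Definition LT := ev R nz.+1 nz.+1 *t I ny.+1 *t I nx.+1.
Definition Lmat := row_mx LW (row_mx LE (row_mx LS (row_mx LN (row_mx LB LT)))).

(* M = number of columns of L *)
Definition Mh := (nz.+1 * ny.+1 * 1 + (nz.+1 * ny.+1 * 1 + (nz.+1 * 1 * nx.+1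
   + (nz.+1 * 1 * nx.+1 + (1 * ny.+1 * nx.+1 + 1 * ny.+1 * nx.+1)))))%N.

Definition Dnhat : 'M[R]_Mh :=
  bdiag (- I _) (bdiag (I _) (bdiag (- I _) (bdiag (I _) (bdiag (- I _) (I _))))).

(* D''_{S,b}; the 2-D blocks tI_{nz+1} (x) tI_{ny+1} etc. are written as
   Kronecker products with the 1x1 identity so that the index sets match
   the columns of L_W, ..., L_T literally. *)
Definition DSbpp : 'M[R]_Mh :=
  bdiag ((dy * dz) *: (tI R nz.+1 *t tI R ny.+1 *t I 1))
  (bdiag ((dy * dz) *: (tI R nz.+1 *t tI R ny.+1 *t I 1))
  (bdiag ((dx * dz) *: (tI R nz.+1 *t I 1 *t tI R nx.+1))
  (bdiag ((dx * dz) *: (tI R nz.+1 *t I 1 *t tI R nx.+1))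
  (bdiag ((dx * dy) *: (I 1 *t tI R ny.+1 *t tI R nx.+1))
         ((dx * dy) *: (I 1 *t tI R ny.+1 *t tI R nx.+1)))))).

Definition Hperp : 'M[R]_(Nn, Mh) := (hbar ^+ 2 / (2 * mass)) *: (Lmat *m Dnhat *m DSbpp).

Definition CFLmat (U : 'cV[R]_Nn) : 'M[R]_Nn :=
  hbar^-1 *: (diag_invsqrt DVpp *m Hmat U *m diag_invsqrt DVpp).

(* psi^n = [psi_R^n ; psi_I^{n-1/2}],  g^{n+1/2} = [g_R^n ; g_I^{n+1/2}] *)
Definition psivec (psiR psiI : nat -> 'cV[R]_Nn) n : 'cV[R]_(Nn + Nn) :=
  col_mx (psiR n) (psiI n).
Definition gvec (gR gI : nat -> 'cV[R]_Mh) n : 'cV[R]_(Mh + Mh) :=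
  col_mx (gR n) (gI n).

(* J_1 (x) H_perp with J_1 = [0 1; -1 0] *)
Definition JHperp : 'M[R]_(Nn + Nn, Mh + Mh) := block_mx 0 Hperp (- Hperp) 0.

Definition probcur (psiR psiI : nat -> 'cV[R]_Nn) (gR gI : nat -> 'cV[R]_Mh) n : R :=
  (2 / hbar) *
  ((2^-1 *: (psivec psiR psiI n.+1 + psivec psiR psiI n))^T *m JHperp
     *m gvec gR gI n) 0 0.

End FDTDQ.

(* Main.v *)
Require Import Defs.
From HB Require Import structures.
From mathcomp Require Import all_boot all_order all_algebra.
From mathcomp Require Import classical_sets reals.
From mathcomp Require Import complex mxtens.
From mathcomp Require Import spectral sesquilinear ring lra.
Import Order.TTheory GRing.Theory Num.Theory.
Set Implicit Arguments. Unset Strict Implicit. Unset Printing Implicit Defensive.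
Local Open Scope ring_scope.
Section Dot.
Variable R : realType.

Definition dot n (u v : 'cV[R]_n) : R := (u^T *m v) 0 0.

Lemma dotE n (u v : 'cV[R]_n) : dot u v = \sum_i u i 0 * v i 0.
Proof. by rewrite /dot mxE; apply: eq_bigr => i _; rewrite mxE. Qed.

Lemma dotC n (u v : 'cV[R]_n) : dot u v = dot v u.
Proof. by rewrite !dotE; apply: eq_bigr => i _; rewrite mulrC. Qed.

Lemma dotDr n (u v w : 'cV[R]_n) : dot u (v + w) = dot u v + dot u w.
Proof. by rewrite !dotE -big_split; apply: eq_bigr => i _; rewrite mxE mulrDr. Qed.
Lemma dotDl n (u v w : 'cV[R]_n) : dot (v + w) u = dot v u + dot w u.
Proof. by rewrite dotC dotDr !(dotC u). Qed.
Lemma dotZr n a (u v : 'cV[R]_n) : dot u (a *: v) = a * dot u v.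
Proof. by rewrite !dotE mulr_sumr; apply: eq_bigr => i _; rewrite mxE mulrCA. Qed.
Lemma dotZl n a (u v : 'cV[R]_n) : dot (a *: v) u = a * dot v u.
Proof. by rewrite dotC dotZr dotC. Qed.
Lemma dotNr n (u v : 'cV[R]_n) : dot u (- v) = - dot u v.
Proof. by rewrite -scaleN1r dotZr mulN1r. Qed.
Lemma dotNl n (u v : 'cV[R]_n) : dot (- v) u = - dot v u.
Proof. by rewrite dotC dotNr dotC. Qed.
Lemma dotBr n (u v w : 'cV[R]_n) : dot u (v - w) = dot u v - dot u w.
Proof. by rewrite dotDr dotNr. Qed.
Lemma dotBl n (u v w : 'cV[R]_n) : dot (v - w) u = dot v u - dot w u.
Proof. by rewrite dotDl dotNl. Qed.
Lemma dot0r n (u : 'cV[R]_n) : dot u 0 = 0.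
Proof. by rewrite dotE big1 // => i _; rewrite mxE mulr0. Qed.
Lemma dot0l n (u : 'cV[R]_n) : dot 0 u = 0.
Proof. by rewrite dotC dot0r. Qed.

Lemma dot_mul n m (u : 'cV[R]_n) (M : 'M[R]_(n, m)) v :
  dot u (M *m v) = dot (M^T *m u) v.
Proof. by rewrite /dot trmx_mul trmxK mulmxA. Qed.

Lemma dot_sym n (M : 'M[R]_n) u v : M^T = M -> dot u (M *m v) = dot v (M *m u).
Proof. by move=> sM; rewrite dot_mul sM dotC. Qed.

Lemma dot_ge0 n (u : 'cV[R]_n) : 0 <= dot u u.
Proof. by rewrite dotE sumr_ge0 // => i _; rewrite -expr2 sqr_ge0. Qed.

Lemma dot_eq0 n (u : 'cV[R]_n) : dot u u = 0 -> u = 0.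
Proof.
rewrite dotE => /eqP; rewrite psumr_eq0 => [/allP H|i _]; last first.
  by rewrite -expr2 sqr_ge0.
apply/matrixP => i j; rewrite ord1 mxE.
have := H i (mem_index_enum i); rewrite -expr2 sqrf_eq0 => /eqP ->//.
Qed.

Lemma norm2_dot n (u : 'cV[R]_n) : norm2 u = Num.sqrt (dot u u).
Proof. by rewrite /norm2 dotE; congr Num.sqrt; apply: eq_bigr => i _; rewrite expr2. Qed.

Lemma norm2_ge0 n (u : 'cV[R]_n) : 0 <= norm2 u.
Proof. by rewrite norm2_dot sqrtr_ge0. Qed.

Lemma norm2_sqr n (u : 'cV[R]_n) : norm2 u ^+ 2 = dot u u.
Proof. by rewrite norm2_dot sqr_sqrtr // dot_ge0. Qed.

Lemma dot_col n1 n2 (a c : 'cV[R]_n1) (b d : 'cV[R]_n2) :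
  dot (col_mx a b) (col_mx c d) = dot a c + dot b d.
Proof. by rewrite /dot tr_col_mx mul_row_col mxE. Qed.

Lemma discr (p q r : R) : (forall t, 0 <= p + 2 * t * q + t ^+ 2 * r) ->
  0 <= r -> q ^+ 2 <= p * r.
Proof.
move=> H r0; have [rp|] := ltrP 0 r.
  have := H (- q / r).
  have -> : p + 2 * (- q / r) * q + (- q / r) ^+ 2 * r = p - q ^+ 2 / r.
    by field; rewrite gt_eqF.
  rewrite subr_ge0 ler_pdivrMr //.
move=> r0'; have r00 : r = 0 by apply/le_anti; rewrite r0 r0'.
move: H; rewrite r00 => H.
have [q0|qn0] := eqVneq q 0; first by rewrite q0 expr0n /= mulr0.
have := H (- (p + 1) / (2 * q)).
have -> : p + 2 * (- (p + 1) / (2 * q)) * q + (- (p + 1) / (2 * q)) ^+ 2 * 0 = -1.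
  by field.
by rewrite lerNr oppr0 ler10.
Qed.

Lemma cs_form n (M : 'M[R]_n) : M^T = M -> (forall w, 0 <= dot w (M *m w)) ->
  forall a b, dot a (M *m b) ^+ 2 <= dot a (M *m a) * dot b (M *m b).
Proof.
move=> sM psd a b; apply: discr => [t|//].
have := psd (a + t *: b).
rewrite mulmxDr !dotDl !dotDr -!scalemxAr !dotZl !dotZr (dot_sym b a sM).
suff -> : dot a (M *m a) + 2 * t * dot a (M *m b) + t ^+ 2 * dot b (M *m b) =
   dot a (M *m a) + t * dot a (M *m b) + (t * dot a (M *m b) + t * (t * dot b (M *m b))) by [].
ring.
Qed.

Lemma cs_dot n (a b : 'cV[R]_n) : dot a b ^+ 2 <= dot a a * dot b b.
Proof.
have := @cs_form n 1%:M (trmx1 _ _) _ a b; rewrite !mul1mx; apply.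
by move=> w; rewrite mul1mx dot_ge0.
Qed.

Lemma dot_le_norm n (a b : 'cV[R]_n) : dot a b <= norm2 a * norm2 b.
Proof.
apply: le_trans (ler_norm _) _.
rewrite -(@ler_pXn2r _ 2) ?nnegrE ?mulr_ge0 ?norm2_ge0 //.
by rewrite exprMn !norm2_sqr real_normK ?num_real // cs_dot.
Qed.

End Dot.
Section Opnorm.
Variable R : realType.
Local Open Scope classical_set_scope.

Lemma norm2Z n (a : R) (v : 'cV[R]_n) : norm2 (a *: v) = `|a| * norm2 v.
Proof.
by rewrite !norm2_dot dotZl dotZr mulrA -expr2 sqrtrM ?sqr_ge0 // sqrtr_sqr.
Qed.

Lemma norm2_0 n : norm2 (0 : 'cV[R]_n) = 0.
Proof. by rewrite norm2_dot dot0l sqrtr0. Qed.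

Lemma norm2_eq0 n (v : 'cV[R]_n) : norm2 v = 0 -> v = 0.
Proof. by rewrite norm2_dot => /eqP; rewrite sqrtr_eq0 => H; apply: dot_eq0; apply/le_anti; rewrite H dot_ge0. Qed.

Lemma mulmx_norm_bound p q (M : 'M[R]_(p, q)) (x : 'cV[R]_q) :
  norm2 x = 1 ->
  norm2 (M *m x) <= Num.sqrt (\sum_i dot (row i M)^T (row i M)^T).
Proof.
move=> nx; rewrite norm2_dot ler_sqrt ?sumr_ge0 // => [|i _]; last exact: dot_ge0.
rewrite dotE; apply: ler_sum => i _.
have -> : (M *m x) i 0 = dot (row i M)^T x.
  by rewrite mxE dotE; apply: eq_bigr => j _; rewrite !mxE.
rewrite -expr2; apply: le_trans (cs_dot _ _) _.
by rewrite -(norm2_sqr x) nx expr1n mulr1.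
Qed.

Lemma opnorm_has_ub p q (M : 'M[R]_(p, q)) :
  has_ubound [set norm2 (M *m x) | x in [set x : 'cV[R]_q | norm2 x = 1]].
Proof.
exists (Num.sqrt (\sum_i dot (row i M)^T (row i M)^T)) => y [x /= nx <-].
exact: mulmx_norm_bound.
Qed.

Lemma opnorm_le p q (M : 'M[R]_(p, q)) (x : 'cV[R]_q) :
  norm2 (M *m x) <= opnorm2 M * norm2 x.
Proof.
have [x0|xn0] := eqVneq x 0.
  by rewrite x0 mulmx0 !norm2_0 mulr0.
have t0 : 0 < norm2 x.
  rewrite lt0r norm2_ge0 andbT; apply: contra xn0 => /eqP H.
  by rewrite (norm2_eq0 H).
have H : norm2 (M *m ((norm2 x)^-1 *: x)) <= opnorm2 M.
  rewrite /opnorm2; have := ub_le_sup (opnorm_has_ub M); apply; exists ((norm2 x)^-1 *: x) => //=.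
  by rewrite norm2Z ger0_norm ?invr_ge0 ?norm2_ge0 // mulVf // gt_eqF.
move: H; rewrite -scalemxAr norm2Z ger0_norm ?invr_ge0 ?norm2_ge0 //.
by rewrite ler_pdivrMl // mulrC.
Qed.

End Opnorm.
Section Spec.
Variable R : realType.
Local Notation C := (R[i]).
Local Open Scope classical_set_scope.
Local Open Scope sesquilinear_scope.
Local Open Scope ring_scope.
Import Num.Def.

Lemma realC (r : R) : (r%:C%C : C) \is Num.real.
Proof. by apply/complex_realP; exists r. Qed.

Lemma conj_rc (r : R) : (r%:C%C : C)^* = r%:C%C.
Proof. exact: conj_Creal (realC r). Qed.

Lemma norm_rc (r : R) : `|(r%:C%C : C)| = (`|r|)%:C%C.
Proof. by rewrite normc_def /= expr0n /= addr0 sqrtr_sqr. Qed.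

Lemma norm_normc (z : C) : `|z| = (ComplexField.Normc.normc z)%:C%C.
Proof. by case: z => a b; rewrite normc_def. Qed.

Lemma normc_ge0 (z : C) : 0 <= ComplexField.Normc.normc z.
Proof. by case: z => a b; rewrite /= sqrtr_ge0. Qed.

Lemma sum_form n (y : 'cV[C]_n) (d : 'rV[C]_n) :
  ((map_mx conjC y)^T *m diag_mx d *m y) 0 0 = \sum_j d 0 j * ((y j 0)^* * y j 0).
Proof.
rewrite mul_mx_diag mxE; apply: eq_bigr => j _; rewrite !mxE.
by rewrite mulrCA mulrA.
Qed.

Lemma sum_form1 n (y : 'cV[C]_n) :
  ((map_mx conjC y)^T *m y) 0 0 = \sum_j ((y j 0)^* * y j 0).
Proof. by rewrite mxE; apply: eq_bigr => j _; rewrite !mxE. Qed.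

Lemma quad_spec n (A : 'M[R]_n) : A^T = A -> forall x : 'cV[R]_n,
  `|dot x (A *m x)| <= specrad A * dot x x.
Proof.
move=> sA x.
pose Ac := map_mx (real_complex R) A.
have normA : Ac \is normalmx.
  apply: symmetric_normalmx.
    apply/is_hermitianmxP; rewrite expr0 scale1r map_mx_id //.
    by rewrite /Ac map_trmx sA.
  by apply/mxOverP => i j; rewrite mxE realC.
pose P := spectralmx Ac; pose d := spectral_diag Ac.
have AcE : Ac = P^t* *m diag_mx d *m P.
  by rewrite -invmx_unitary ?spectral_unitarymx //; apply/orthomx_spectralP.
have PPt : P *m P^t* = 1%:M by apply/unitarymxP; apply: spectral_unitarymx.
have PtP : P^t* *m P = 1%:M := mulmx1C PPt.
have eigd : forall l, eigenvalue Ac l -> exists j, l = d 0 j.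
  move=> l /eigenvalueP [v vA vn0].
  pose w := v *m P^t*.
  have wd : w *m diag_mx d = l *: w.
    have := congr1 (mulmx^~ (P^t*)) vA.
    by rewrite AcE !mulmxA -(mulmxA _ P) PPt mulmx1 -scalemxAl; apply.
  have wn0 : w != 0.
    apply: contra vn0 => /eqP w0.
    have -> : v = w *m P by rewrite /w -mulmxA PtP mulmx1.
    by rewrite w0 mul0mx.
  clearbody w.
  have : [exists j, w 0 j != 0].
    apply: contraR wn0 => /existsPn H; apply/eqP/rowP => k.
    by move: (H k); rewrite negbK => /eqP ->; rewrite mxE.
  case/existsP => j wj; exists j.
  have := congr1 (fun M : 'rV[C]_n => M 0 j) wd; rewrite mul_mx_diag !mxE => /eqP.
  rewrite mulrC => /eqP E; apply: (mulfI wj); by rewrite mulrC -E mulrC.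
have ub : has_ubound [set ComplexField.Normc.normc l |
        l in [set l : C | eigenvalue (map_mx (fun x : R => x%:C%C) A) l]].
  exists (\sum_j ComplexField.Normc.normc (d 0 j)) => y0 [l /= /eigd [j ->] <-].
  rewrite (bigD1 j) //= lerDl sumr_ge0 // => k _; exact: normc_ge0.
have dle : forall j, `|d 0 j| <= (specrad A)%:C%C.
  move=> j; rewrite norm_normc lecR /specrad.
  have := ub_le_sup ub; apply; exists (d 0 j) => //=.
  change (eigenvalue Ac (d 0 j)).
  apply/eigenvalueP; exists (row j P).
    rewrite AcE !mulmxA -row_mul PPt.
    have -> : row j (1%:M : 'M[C]_n) *m diag_mx d = d 0 j *: row j 1%:M.
      apply/rowP => k; rewrite mul_mx_diag !mxE.
      by case: (eqVneq j k) => [->|ne]; rewrite ?mulr1n ?mulr0n ?mul1r ?mul0r ?mulr0 ?mulr1.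
    by rewrite -scalemxAl -row_mul mul1mx.
  apply/negP => /eqP r0.
  have := congr1 (fun M => (M *m P^t*) 0 j) r0.
  rewrite -row_mul PPt mul0mx !mxE eqxx /= => /eqP; rewrite oner_eq0 //.
pose xc := map_mx (real_complex R) x.
have xcc : map_mx conjC xc = xc by apply/matrixP => i j; rewrite !mxE conj_rc.
pose y := P *m xc.
have xP : xc^T *m P^t* = (map_mx conjC y)^T.
  rewrite /y map_mxM xcc trmx_mul; congr (_ *m _); apply/matrixP => i j; rewrite !mxE; reflexivity.
have e1 : (dot x (A *m x))%:C%C = ((map_mx conjC y)^T *m diag_mx d *m y) 0 0.
  have -> : (dot x (A *m x))%:C%C = (xc^T *m Ac *m xc) 0 0.
    by rewrite /dot mulmxA /xc /Ac map_trmx -!map_mxM [in RHS]mxE.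
  by rewrite AcE !mulmxA xP -(mulmxA _ P xc).
have e2 : (dot x x)%:C%C = ((map_mx conjC y)^T *m y) 0 0.
  have -> : (dot x x)%:C%C = (xc^T *m xc) 0 0.
    by rewrite /dot /xc map_trmx -!map_mxM [in RHS]mxE.
  have -> : xc^T *m xc = xc^T *m P^t* *m (P *m xc).
    by rewrite mulmxA -(mulmxA _ (P^t*)) PtP mulmx1.
  by rewrite xP.
rewrite -lecR -norm_rc e1 rmorphM /= e2 sum_form sum_form1 mulr_sumr.
apply: le_trans (ler_norm_sum _ _ _) _; apply: ler_sum => j _.
have cy0 : 0 <= (y j 0)^* * y j 0 by rewrite mulrC mul_conjC_ge0.
by rewrite normrM (ger0_norm cy0) ler_wpM2r.
Qed.

End Spec.
Section Generic2.
Variable R : realType.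

Lemma bil_spec n (A : 'M[R]_n) : A^T = A -> forall u v : 'cV[R]_n,
  `|dot u (A *m v)| <= specrad A / 2 * (dot u u + dot v v).
Proof.
move=> sA u v.
have E : dot u (A *m v) =
  (dot (u + v) (A *m (u + v)) - dot (u - v) (A *m (u - v))) / 4.
  rewrite !mulmxDr !mulmxN !dotDl ?dotBl ?dotNl !dotDr ?dotBr ?dotNr (dot_sym v u sA).
  by field; rewrite ?pnatr_eq0.
have E2 : dot (u + v) (u + v) + dot (u - v) (u - v) = 2 * (dot u u + dot v v).
  rewrite !dotDl ?dotBl ?dotNl !dotDr ?dotBr ?dotNr (dotC v u); ring.
rewrite E normrM [`|_^-1|]ger0_norm ?invr_ge0 ?ler0n //.
have h1 := quad_spec sA (u + v); have h2 := quad_spec sA (u - v).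
have h := le_trans (ler_normB _ _) (lerD h1 h2).
apply: le_trans (ler_wpM2r _ h) _; first by rewrite invr_ge0 ler0n.
rewrite -mulrDr E2 le_eqVlt; apply/orP; left; apply/eqP; by field; rewrite ?pnatr_eq0.
Qed.

Definition pdiag n (M : 'M[R]_n) :=
  (forall i j, i != j -> M i j = 0) /\ (forall i, 0 < M i i).

Lemma pdiag_tI p : pdiag (tI R p).
Proof.
split => [i j ij|i]; rewrite !mxE ?(negbTE ij) // eqxx.
by case: ifP => _; rewrite ?invr_gt0 ?ltr0n ?ltr01.
Qed.

Lemma pdiag_tens m n (A : 'M[R]_m) (B : 'M[R]_n) :
  pdiag A -> pdiag B -> pdiag (tensmx A B).
Proof.
move=> [A0 Ap] [B0 Bp]; split.
  move=> i j; case: (mxtens_indexP i) => i1 i2; case: (mxtens_indexP j) => j1 j2.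
  rewrite tensmxE; case: (eqVneq i1 j1) => [<-|ne]; last by rewrite A0 ?mul0r.
  case: (eqVneq i2 j2) => [<-|ne]; last by rewrite B0 ?mulr0.
  by rewrite eqxx.
by move=> i; case: (mxtens_indexP i) => i1 i2; rewrite tensmxE mulr_gt0.
Qed.

Lemma pdiag_scale n (a : R) (M : 'M[R]_n) : 0 < a -> pdiag M -> pdiag (a *: M).
Proof.
move=> a0 [M0 Mp]; split => [i j ij|i]; rewrite mxE; first by rewrite M0 ?mulr0.
exact: mulr_gt0.
Qed.

Definition dsq n (M : 'M[R]_n) : 'M[R]_n := diag_mx (\row_i Num.sqrt (M i i)).

Lemma pdiag_diag n (M : 'M[R]_n) : pdiag M -> M = diag_mx (\row_i M i i).
Proof.
move=> [M0 _]; apply/matrixP => i j; rewrite !mxE.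
case: (eqVneq i j) => [->|ne]; first by rewrite mulr1n.
by rewrite mulr0n M0.
Qed.

Lemma pdiag_tr n (M : 'M[R]_n) : pdiag M -> M^T = M.
Proof. by move=> /pdiag_diag ->; rewrite tr_diag_mx. Qed.

Lemma dsq_sq n (M : 'M[R]_n) : pdiag M -> dsq M *m dsq M = M.
Proof.
move=> pM; rewrite /dsq mulmx_diag [RHS](pdiag_diag pM); congr diag_mx.
apply/rowP => i; rewrite !mxE -expr2 sqr_sqrtr //; exact: ltW (pM.2 i).
Qed.

Lemma dsq_tr n (M : 'M[R]_n) : (dsq M)^T = dsq M.
Proof. by rewrite /dsq tr_diag_mx. Qed.

Lemma invsqrt_diag n (M : 'M[R]_n) :
  diag_invsqrt M = diag_mx (\row_i (Num.sqrt (M i i))^-1).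
Proof.
apply/matrixP => i j; rewrite !mxE.
case: (eqVneq i j) => [->|ne]; first by rewrite mulr1n.
by rewrite mulr0n.
Qed.

Lemma invsqrt_tr n (M : 'M[R]_n) : (diag_invsqrt M)^T = diag_invsqrt M.
Proof. by rewrite invsqrt_diag tr_diag_mx. Qed.

Lemma invsqrt_dsq n (M : 'M[R]_n) : pdiag M -> diag_invsqrt M *m dsq M = 1%:M.
Proof.
move=> pM; rewrite invsqrt_diag /dsq mulmx_diag; apply/matrixP => i j.
rewrite !mxE; case: (eqVneq i j) => [->|ne]; last by rewrite !mulr0n.
by rewrite !mulr1n mulVf // gt_eqF // sqrtr_gt0 (pM.2 j).
Qed.

Lemma trmx_bdiag m n (A : 'M[R]_m) (B : 'M[R]_n) : (bdiag A B)^T = bdiag A^T B^T.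
Proof. by rewrite /bdiag tr_block_mx !trmx0. Qed.

Lemma mul_bdiag m n (A C : 'M[R]_m) (B D : 'M[R]_n) :
  bdiag A B *m bdiag C D = bdiag (A *m C) (B *m D).
Proof. by rewrite /bdiag mulmx_block !mulmx0 !mul0mx !addr0 !add0r. Qed.

Lemma trmxZ' m n (a : R) (A : 'M[R]_(m, n)) : (a *: A)^T = a *: A^T.
Proof. by apply/matrixP => i j; rewrite !mxE. Qed.

Lemma tI_tr p : (tI R p)^T = tI R p.
Proof. exact: pdiag_tr (pdiag_tI p). Qed.

Lemma comm_inv n (A B : 'M[R]_n) : A *m B = B *m A -> A *m invmx B = invmx B *m A.
Proof.
move=> AB; case: (boolP (B \in unitmx)) => Bu; last by rewrite invmx_out.
rewrite -[RHS]mulmx1 -(mulmxV Bu) !mulmxA -(mulmxA _ A B) AB mulmxA mulVmx //.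
by rewrite mul1mx.
Qed.

End Generic2.
Section Concrete.
Variables (R : realType) (hbar mass dx dy dz : R) (nx ny nz : nat) (dt : R).
Variable U : 'cV[R]_(Nn nx ny nz).
Hypotheses (hb0 : 0 < hbar) (dx0 : 0 < dx) (dy0 : 0 < dy) (dz0 : 0 < dz).

Local Notation D := (DVpp dx dy dz nx ny nz).
Local Notation H := (Hmat hbar mass dx dy dz U).
Local Notation Hp := (Hperp hbar mass dx dy dz nx ny nz).
Local Notation P := (Pmat hbar mass dx dy dz dt U).
Local Notation A := (CFLmat hbar mass dx dy dz U).

Lemma pdiag_D : pdiag D.
Proof.
apply: pdiag_scale; first by rewrite !mulr_gt0.
by apply: pdiag_tens; [apply: pdiag_tens|]; apply: pdiag_tI.
Qed.

Lemma DS_tr : (DSpp dx dy dz nx ny nz)^T = DSpp dx dy dz nx ny nz.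
Proof. by rewrite /DSpp !trmx_bdiag !trmxZ' !trmx_tens !tI_tr !trmx1. Qed.

Lemma Dl_tr : (Dlp dx dy dz nx ny nz)^T = Dlp dx dy dz nx ny nz.
Proof. by rewrite /Dlp !trmx_bdiag !tr_scalar_mx. Qed.

Lemma DS_Dl : DSpp dx dy dz nx ny nz *m Dlp dx dy dz nx ny nz =
  Dlp dx dy dz nx ny nz *m DSpp dx dy dz nx ny nz.
Proof. by rewrite /DSpp /Dlp !mul_bdiag !scalar_mxC. Qed.

Lemma H_tr : H^T = H.
Proof.
rewrite /Hmat linearD /= trmxZ' !trmx_mul trmxK trmx_inv Dl_tr DS_tr.
congr (_ *: _ + _).
  by rewrite !mulmxA -(mulmxA _ (invmx _)) -(comm_inv DS_Dl) mulmxA.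
rewrite /DU tr_diag_mx (pdiag_tr pdiag_D) [D](pdiag_diag pdiag_D) diag_mxC //.
Qed.

Lemma A_tr : A^T = A.
Proof. by rewrite /CFLmat trmxZ' !trmx_mul !invsqrt_tr H_tr mulmxA. Qed.

Lemma SHS : diag_invsqrt D *m H *m diag_invsqrt D = hbar *: A.
Proof. by rewrite /CFLmat scalerA mulfV ?gt_eqF // scale1r. Qed.

Lemma P_tr : P^T = P.
Proof. by rewrite /Pmat tr_block_mx (pdiag_tr pdiag_D) !trmxZ' H_tr. Qed.

Lemma Q_col (x y : 'cV[R]_(Nn nx ny nz)) :
  dot (col_mx x y) (P *m col_mx x y) =
  dot x (D *m x) + dot y (D *m y) - dt / hbar * dot x (H *m y).
Proof.
rewrite /Pmat mul_block_col dot_col !dotDr -!scalemxAl !dotZr.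
rewrite (dot_sym y x H_tr).
by field; rewrite gt_eqF.
Qed.

End Concrete.
Section Generic3.
Variable R : realType.

Lemma dot_mulC n m (M : 'M[R]_(n, m)) u w : dot (M *m u) w = dot u (M^T *m w).
Proof. by rewrite dot_mul trmxK. Qed.

Lemma G1 n (M : 'M[R]_n) z : dot z (M *m z) <= opnorm2 M * dot z z.
Proof.
apply: le_trans (dot_le_norm _ _) _.
apply: le_trans (ler_wpM2l (norm2_ge0 z) (opnorm_le M z)) _.
by rewrite mulrCA -expr2 norm2_sqr.
Qed.

Lemma G2 n (M : 'M[R]_n) : M^T = M -> (forall w, 0 <= dot w (M *m w)) ->
  M \in unitmx -> forall z, dot z z <= opnorm2 (invmx M) * dot z (M *m z).
Proof.
move=> sM psd Mu z.
have [->|zn0] := eqVneq z 0; first by rewrite dot0l mulmx0 dot0r mulr0.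
have zz0 : 0 < dot z z.
  rewrite lt0r dot_ge0 andbT; apply: contra zn0 => /eqP H; exact/eqP/dot_eq0.
pose w := invmx M *m z.
have Mw : M *m w = z by rewrite /w mulKVmx.
have h1 := cs_form sM psd z w.
rewrite Mw [dot w z]dotC in h1.
have h2 : dot z w <= opnorm2 (invmx M) * dot z z.
  rewrite dotC; apply: le_trans (dot_le_norm _ _) _.
  apply: le_trans (ler_wpM2r (norm2_ge0 z) (opnorm_le (invmx M) z)) _.
  by rewrite -mulrA -expr2 norm2_sqr.
have h3 : dot z z ^+ 2 <= dot z (M *m z) * (opnorm2 (invmx M) * dot z z).
  exact: le_trans h1 (ler_wpM2l (psd z) h2).
rewrite expr2 mulrA in h3.
by rewrite mulrC -(ler_pM2r zz0).
Qed.

Lemma energy_step N M (D H : 'M[R]_N) (Hp : 'M[R]_(N, M)) (x x' y y' : 'cV[R]_N)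
  (gR gI : 'cV[R]_M) (h dt : R) :
  D^T = D -> H^T = H -> h != 0 -> dt != 0 ->
  (h / dt) *: (D *m (x' - x)) = H *m y' - Hp *m gI ->
  (h / dt) *: (D *m (y' - y)) = - (H *m x) + Hp *m gR ->
  dot (x' + x) (Hp *m gI) = dot (y' + y) (Hp *m gR) ->
  dot x' (D *m x') + dot y' (D *m y') - dt / h * dot x' (H *m y') =
  dot x (D *m x) + dot y (D *m y) - dt / h * dot x (H *m y).
Proof.
move=> sD sH h0 dt0 e1 e2 e3.
set k := h / dt; set c := dt / h.
have kc : c * k = 1 by rewrite /c /k; field; rewrite h0 dt0.
have f1 : k * (dot x' (D *m x') - dot x (D *m x)) =
          dot x' (H *m y') + dot x (H *m y') - dot (x' + x) (Hp *m gI).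
  have E := congr1 (dot (x' + x)) e1; rewrite dotZr -/k in E.
  have -> : dot x' (D *m x') - dot x (D *m x) = dot (x' + x) (D *m (x' - x)).
    by rewrite mulmxBr dotBr !dotDl (dot_sym x' x sD); ring.
  by rewrite E dotBr dotDl.
have f2 : k * (dot y' (D *m y') - dot y (D *m y)) =
          - (dot x (H *m y') + dot x (H *m y)) + dot (y' + y) (Hp *m gR).
  have E := congr1 (dot (y' + y)) e2; rewrite dotZr -/k in E.
  have -> : dot y' (D *m y') - dot y (D *m y) = dot (y' + y) (D *m (y' - y)).
    by rewrite mulmxBr dotBr !dotDl (dot_sym y' y sD); ring.
  by rewrite E dotDr dotNr dotDl (dot_sym y' x sH) (dot_sym y x sH).
have g1 : dot x' (D *m x') - dot x (D *m x) =
          c * (dot x' (H *m y') + dot x (H *m y') - dot (x' + x) (Hp *m gI)).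
  by rewrite -f1 mulrA kc mul1r.
have g2 : dot y' (D *m y') - dot y (D *m y) =
          c * (- (dot x (H *m y') + dot x (H *m y)) + dot (y' + y) (Hp *m gR)).
  by rewrite -f2 mulrA kc mul1r.
rewrite e3 in g1.
apply/eqP; rewrite -subr_eq0; apply/eqP.
set a' := dot x' (D *m x') in g1 *; set a := dot x (D *m x) in g1 *.
set b' := dot y' (D *m y') in g2 *; set b := dot y (D *m y) in g2 *.
have -> : a' + b' - c * dot x' (H *m y') - (a + b - c * dot x (H *m y)) =
   (a' - a) + (b' - b) - c * (dot x' (H *m y') - dot x (H *m y)) by ring.
rewrite g1 g2; ring.
Qed.

End Generic3.
Section Concrete2.
Variables (R : realType) (hbar mass dx dy dz : R) (nx ny nz : nat) (dt : R).
Variable U : 'cV[R]_(Nn nx ny nz).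
Hypotheses (hb0 : 0 < hbar) (dx0 : 0 < dx) (dy0 : 0 < dy) (dz0 : 0 < dz).
Hypotheses (dt0 : 0 < dt) (cfl : dt * specrad (CFLmat hbar mass dx dy dz U) < 2).

Local Notation D := (DVpp dx dy dz nx ny nz).
Local Notation H := (Hmat hbar mass dx dy dz U).
Local Notation Hp := (Hperp hbar mass dx dy dz nx ny nz).
Local Notation P := (Pmat hbar mass dx dy dz dt U).
Local Notation A := (CFLmat hbar mass dx dy dz U).

Lemma Q_lower (x y : 'cV[R]_(Nn nx ny nz)) :
  (1 - dt * specrad A / 2) *
    (dot (dsq D *m x) (dsq D *m x) + dot (dsq D *m y) (dsq D *m y))
  <= dot (col_mx x y) (P *m col_mx x y).
Proof.
have pD := pdiag_D nx ny nz dx0 dy0 dz0.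
set Sq := dsq D; set S := diag_invsqrt D.
have Dx : forall w, dot w (D *m w) = dot (Sq *m w) (Sq *m w).
  by move=> w; rewrite -{1}(dsq_sq pD) -mulmxA dot_mul dsq_tr.
have xS : forall w : 'cV[R]_(Nn nx ny nz), w = S *m (Sq *m w).
  by move=> w; rewrite mulmxA invsqrt_dsq // mul1mx.
set u := Sq *m x; set v := Sq *m y.
have Hxy : dot x (H *m y) = hbar * dot u (A *m v).
  rewrite [x]xS [y]xS -/u -/v dot_mulC invsqrt_tr !mulmxA.
  by rewrite (SHS _ _ _ _ _ hb0) -!mulmxA -scalemxAl dotZr.
rewrite (Q_col mass dt U hb0 dx0 dy0 dz0) !Dx -/u -/v Hxy mulrA divfK ?gt_eqF //.
have b := bil_spec (A_tr hbar mass U dx0 dy0 dz0) u v.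
have b2 : dt * dot u (A *m v) <= dt * (specrad A / 2 * (dot u u + dot v v)).
  by rewrite ler_pM2l // (le_trans (ler_norm _) b).
have -> : (1 - dt * specrad A / 2) * (dot u u + dot v v) =
   dot u u + dot v v - dt * (specrad A / 2 * (dot u u + dot v v)) by ring.
by rewrite lerD2l lerN2.
Qed.

Lemma cfl_pos : 0 < 1 - dt * specrad A / 2.
Proof. by rewrite subr_gt0 ltr_pdivrMr ?ltr0n // mul1r. Qed.

Lemma Q_ge0 z : 0 <= dot z (P *m z).
Proof.
rewrite -[z]vsubmxK; apply: le_trans (Q_lower _ _).
apply: mulr_ge0; [exact: ltW cfl_pos | by rewrite addr_ge0 ?dot_ge0].
Qed.

Lemma Q_eq0 z : dot z (P *m z) = 0 -> z = 0.
Proof.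
rewrite -[z]vsubmxK => Q0; have := Q_lower (usubmx z) (dsubmx z); rewrite Q0.
rewrite pmulr_rle0 ?cfl_pos // => H0.
have pD := pdiag_D nx ny nz dx0 dy0 dz0.
have e : forall w : 'cV[R]_(Nn nx ny nz), dsq D *m w = 0 -> w = 0.
  by move=> w w0; have := congr1 (mulmx (diag_invsqrt D)) w0; rewrite mulmxA (invsqrt_dsq pD) mul1mx mulmx0.
have s0 := dot_ge0 (dsq D *m usubmx z); have s1 := dot_ge0 (dsq D *m dsubmx z).
have h0 : dot (dsq D *m usubmx z) (dsq D *m usubmx z) = 0.
  apply/le_anti; rewrite s0 andbT; apply: le_trans H0; by rewrite lerDl.
have h1 : dot (dsq D *m dsubmx z) (dsq D *m dsubmx z) = 0.
  apply/le_anti; rewrite s1 andbT; apply: le_trans H0; by rewrite lerDr.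
by rewrite (e _ (dot_eq0 h0)) (e _ (dot_eq0 h1)) col_mx0.
Qed.

Lemma P_unit : P \in unitmx.
Proof.
rewrite -row_free_unit -kermx_eq0; apply/eqP/row_matrixP => i; rewrite row0.
set r := row i _.
have rP : r *m P = 0 by rewrite /r -row_mul mulmx_ker row0.
have Pr : P *m r^T = 0.
  by rewrite -[P](P_tr hbar mass dt U dx0 dy0 dz0) -trmx_mul rP trmx0.
apply: trmx_inj; rewrite trmx0; apply: Q_eq0.
by rewrite Pr dot0r.
Qed.

End Concrete2.

Lemma probcurE (R : realType) (hbar mass dx dy dz : R) (nx ny nz : nat)
  (psiR psiI : nat -> 'cV[R]_(Nn nx ny nz))
  (gR gI : nat -> 'cV[R]_(Mh nx ny nz)) n :
  probcur hbar mass dx dy dz psiR psiI gR gI n =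
  hbar^-1 * (dot (psiR n.+1 + psiR n) (Hperp hbar mass dx dy dz nx ny nz *m gI n)
           - dot (psiI n.+1 + psiI n) (Hperp hbar mass dx dy dz nx ny nz *m gR n)).
Proof.
rewrite /probcur -mulmxA -/(dot _ _) /psivec /gvec /JHperp mul_block_col.
rewrite !mul0mx add0r addr0 add_col_mx scale_col_mx dot_col !dotZl mulNmx dotNr.
have h2 : (2 : R) != 0 by rewrite pnatr_eq0.
rewrite -mulrDr mulrA; congr (_ * _); by rewrite mulrAC mulfV // mul1r.
Qed.
Theorem lemma3 (R : realType) (hbar mass dx dy dz : R) (nx ny nz nt : nat) (dt : R)
  (U : 'cV[R]_(Nn nx ny nz))
  (psiR psiI : nat -> 'cV[R]_(Nn nx ny nz))
  (gR gI : nat -> 'cV[R]_(Mh nx ny nz)) :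
  0 < hbar -> 0 < mass -> 0 < dx -> 0 < dy -> 0 < dz ->
  (0 < nx)%N -> (0 < ny)%N -> (0 < nz)%N -> (0 < nt)%N ->
  0 < dt -> dt * specrad (CFLmat hbar mass dx dy dz U) < 2 ->
  (forall n, (n < nt)%N ->
     (hbar / dt) *: (DVpp dx dy dz nx ny nz *m (psiR n.+1 - psiR n))
     = Hmat hbar mass dx dy dz U *m psiI n.+1
       - Hperp hbar mass dx dy dz nx ny nz *m gI n) ->
  (forall n, (n < nt)%N ->
     (hbar / dt) *: (DVpp dx dy dz nx ny nz *m (psiI n.+1 - psiI n))
     = - (Hmat hbar mass dx dy dz U *m psiR n)
       + Hperp hbar mass dx dy dz nx ny nz *m gR n) ->
  (forall n, (n < nt)%N -> probcur hbar mass dx dy dz psiR psiI gR gI n = 0) ->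
  forall n, (n <= nt)%N ->
    norm2 (psivec psiR psiI n)
    <= Num.sqrt (cond2 (Pmat hbar mass dx dy dz dt U)) * norm2 (psivec psiR psiI 0).
Proof.
move=> hb0 m0 dx0 dy0 dz0 _ _ _ _ dt0 cfl e1 e2 pc n nle.
set P := Pmat hbar mass dx dy dz dt U.
have Psym : P^T = P := P_tr hbar mass dt U dx0 dy0 dz0.
have psd : forall w, 0 <= dot w (P *m w) := Q_ge0 hb0 dx0 dy0 dz0 dt0 cfl.
have Pu : P \in unitmx := P_unit hb0 dx0 dy0 dz0 dt0 cfl.
have cons : forall m, (m <= nt)%N ->
    dot (psivec psiR psiI m) (P *m psivec psiR psiI m) =
    dot (psivec psiR psiI 0) (P *m psivec psiR psiI 0).
  elim => [//|m IH] mlt; rewrite -IH ?(ltnW mlt) //.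
  rewrite /psivec /P !(Q_col mass dt U hb0 dx0 dy0 dz0).
  apply: (energy_step (pdiag_tr (pdiag_D nx ny nz dx0 dy0 dz0))
     (H_tr hbar mass U dx0 dy0 dz0) (negbT (gt_eqF hb0)) (negbT (gt_eqF dt0)) (e1 m mlt) (e2 m mlt)).
  have := pc m mlt; rewrite probcurE => /eqP; rewrite mulf_eq0 invr_eq0 gt_eqF //=.
    by rewrite subr_eq0 => /eqP.
have g1 := G1 P (psivec psiR psiI 0).
have g2 := G2 Psym psd Pu (psivec psiR psiI n).
rewrite cons // in g2.
set a := dot (psivec psiR psiI n) (psivec psiR psiI n) in g2.
set b := dot (psivec psiR psiI 0) (psivec psiR psiI 0) in g1.
set q := dot (psivec psiR psiI 0) (P *m psivec psiR psiI 0) in g1 g2.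
have q0 : 0 <= q := psd _.
have a0 : 0 <= a := dot_ge0 _.
have b0 : 0 <= b := dot_ge0 _.
have [an0|] := eqVneq a 0.
  rewrite norm2_dot -/a an0 sqrtr0 mulr_ge0 ?sqrtr_ge0 ?norm2_ge0 //.
move=> an0; have ap : 0 < a by rewrite lt0r an0 a0.
have op'0 : 0 <= opnorm2 (invmx P).
  rewrite leNgt; apply/negP => opn.
  have : opnorm2 (invmx P) * q <= 0 by rewrite mulr_le0_ge0 // ltW.
  by move=> h; have := lt_le_trans ap (le_trans g2 h); rewrite ltxx.
have ab : a <= cond2 P * b.
  apply: le_trans g2 _.
  have -> : cond2 P * b = opnorm2 (invmx P) * (opnorm2 P * b) by rewrite /cond2; ring.
  exact: (ler_wpM2l op'0 g1).
have k0 : 0 <= cond2 P.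
  rewrite leNgt; apply/negP => kn.
  have : cond2 P * b <= 0 by rewrite mulr_le0_ge0 // ltW.
  by move=> h; have := lt_le_trans ap (le_trans ab h); rewrite ltxx.
rewrite !norm2_dot -/a -/b -sqrtrM // ler_sqrt //; exact: mulr_ge0.
Qed.
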